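(* Let $\Pi = R_{gen} \cup R_{pref}$ be a fuzzy answer set optimization program, $\Pi^e = R^e_{gen} \cup R^e_{pref}$ be the fuzzy answer set program translation of $\Pi$, $r$ be a fuzzy preference rule in $R_{pref}$, $C_i$ be a boolean combination in the head of $r$, $I$ be a fuzzy answer set of $\Pi$, and $I'$ be a fuzzy answer set of $\Pi^e$ that corresponds to $I$. Then, (1) $I \models_{i} r$ iff $I' \models sat(r, i):1$; (2) $I \models_{irr} r$ iff $I' \models sat(r, irr):1$.
   Context: A fuzzy annotated literal is $l:\mu$ with $l$ a literal (atom or classically negated atom) and $\mu$ a fuzzy annotation in $[0,1]$. A fuzzy answer set optimization program is $\Pi = R_{gen} \cup R_{pref}$, where $R_{gen}$ is a set of fuzzy logic rules under fuzzy answer set semantics (the generator rules) and $R_{pref}$ is a set of fuzzy preference rules, each of the form $r:\; C_1 \succ C_2 \succ \ldots \succ C_k \leftarrow l_{k+1}:\mu_{k+1},\ldots, l_m:\mu_m, not\; l_{m+1}:\mu_{m+1},\ldots, not\;l_n:\mu_n$, where $body(r)$ is the right-hand side and each $C_i$ is a boolean combination (built with $\wedge$, $\vee$, and $not$ applied only to fuzzy annotated literals), written in generalized fuzzy annotated DNF $C_i = (s_{1,1}:\mu_{1,1} \land \ldots \land s_{1,t_1}:\mu_{1,t_1}) \vee \ldots \vee (s_{u,1}:\mu_{u,1} \land \ldots \land s_{u,t_u}:\mu_{u,t_u})$, each $s_{v,w}:\mu_{v,w}$ a fuzzy annotated literal possibly preceded by $not$. Satisfaction by a (possibly partial) fuzzy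 answer set $I$: $I \models l:\mu$ iff $\mu \leq I(l)$; $I \models not\; l:\mu$ iff $\mu \nleq I(l)$ or $l$ is undefined in $I$; $I \models C \wedge C'$ iff both hold; $I \models C \vee C'$ iff either holds; $I \models body(r)$ iff $I$ satisfies every (possibly $not$-preceded) annotated literal in the body. Then $I \models_i r$ iff $I \models body(r)$ and $I \models C_i$; $I \models_{irr} r$ iff either $I \models body(r)$ and $I$ satisfies no $C_i$ in $head(r)$, or $I$ does not satisfy $body(r)$. The translation $\Pi^e$: $R^e_{gen} = R_{gen}$, and $R^e_{pref}$ consists of the following extended fuzzy logic rules (single annotated literal in the head; answer sets may be partial mappings), with $sat(r,i)$ a predicate meaning $C_i$ of $r$ is satisfied: for each $r \in R_{pref}$, $body(r):1 \leftarrow l_{k+1}:\mu_{k+1},\ldots, l_m:\mu_m, not\; l_{m+1}:\mu_{m+1},\ldots, not\;l_n:\mu_n$; for each $C_i$ in $head(r)$ and each disjunct $v$ ($1\le v\le u$), $sat(r,i):1 \leftarrow s_{v,1}:\mu_{v,1},\ldots, s_{v,t_v}:\mu_{v,t_v}, body(r):1$; and for each $r$, $sat(r,irr):1 \leftarrow not\; body(r):1$ and $sat(r,irr):1 \leftarrow not\; sat(r,1):1,\ldots, not\; sat(r,k):1, body(r):1$. The fuzzy answer sets of $\Pi$ are in one-to-one correspondence with those of $\Pi^e$. *)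

(* Defs.v *)
From Stdlib Require Import Reals List.
Import ListNotations.
Open Scope R_scope.

(** Literals: an atom or a classically negated atom. *)
Inductive lit (A : Type) : Type :=
| Pos (a : A)
| Neg (a : A).
Arguments Pos {A} a.
Arguments Neg {A} a.

(** A fuzzy annotated literal [l:mu], possibly preceded by default negation [not]. *)
Inductive blit (A : Type) : Type :=
| BL (l : lit A) (mu : R)
| NotL (l : lit A) (mu : R).
Arguments BL {A} l mu.
Arguments NotL {A} l mu.

Definition finterp (A : Type) := lit A -> option R.

Definition fuzzy_interp {A : Type} (I : finterp A) : Prop :=
  forall l v, I l = Some v -> 0 <= v <= 1.

Definition sat_al {A : Type} (I : finterp A) (l : lit A) (mu : R) : Prop :=
  exists v, I l = Some v /\ mu <= v.

Definition sat_nal {A : Type} (I : finterp A) (l : lit A) (mu : R) : Prop :=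
  match I l with
  | None => True
  | Some v => ~ (mu <= v)
  end.

Definition sat_blit {A : Type} (I : finterp A) (b : blit A) : Prop :=
  match b with
  | BL l mu => sat_al I l mu
  | NotL l mu => sat_nal I l mu
  end.

Definition sat_conj {A : Type} (I : finterp A) (c : list (blit A)) : Prop :=
  Forall (sat_blit I) c.

(** Boolean combination in generalized fuzzy annotated DNF: a disjunction
    (list) of conjunctions (lists) of possibly not-preceded annotated literals. *)
Definition dnf (A : Type) := list (list (blit A)).

Definition sat_dnf {A : Type} (I : finterp A) (C : dnf A) : Prop :=
  Exists (sat_conj I) C.

Record frule (A : Type) : Type := mkFrule {
  fhead : lit A * R;
  fbody : list (blit A) }.
Arguments mkFrule {A} fhead fbody.
Arguments fhead {A} f.
Arguments fbody {A} f.

Definition sat_rule {A : Type} (I : finterp A) (r : frule A) : Prop :=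
  sat_conj I (fbody r) -> sat_al I (fst (fhead r)) (snd (fhead r)).

Definition model {A : Type} (P : frule A -> Prop) (I : finterp A) : Prop :=
  forall r, P r -> sat_rule I r.

Definition le_interp {A : Type} (I J : finterp A) : Prop :=
  forall l v, I l = Some v -> exists w, J l = Some w /\ v <= w.

(** Gelfond-Lifschitz style reduct P^I: delete every rule having some
    [not l:mu] in its body with I |= l:mu (i.e. I does not satisfy not l:mu),
    and delete all [not]-literals from the remaining rules. *)
Definition pos_part {A : Type} (b : list (blit A)) : list (blit A) :=
  filter (fun x => match x with BL _ _ => true | NotL _ _ => false end) b.

Definition neg_ok {A : Type} (I : finterp A) (b : list (blit A)) : Prop :=
  Forall (fun x => match x with NotL l mu => sat_nal I l mu | BL _ _ => True end) b.

Definition reduct {A : Type} (P : list (frule A)) (I : finterp A) : frule A -> Prop :=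
  fun r' => exists r, In r P /\ neg_ok I (fbody r) /\
                      r' = mkFrule (fhead r) (pos_part (fbody r)).

Definition fuzzy_answer_set {A : Type} (P : list (frule A)) (I : finterp A) : Prop :=
  fuzzy_interp I /\ model (reduct P I) I /\
  (forall J, fuzzy_interp J -> model (reduct P I) J -> le_interp J I -> le_interp I J).

(** Fuzzy preference rules  C_1 > ... > C_k <- body.
    [phead r] is the list [C_1; ...; C_k]; C_i is [nth (i-1) (phead r) []]. *)
Record prule (A : Type) : Type := mkPrule {
  phead : list (dnf A);
  pbody : list (blit A) }.
Arguments mkPrule {A} phead pbody.
Arguments phead {A} p.
Arguments pbody {A} p.

(** I |=_i r  (0-based index i, i.e. C_{i+1} in the paper's numbering). *)
Definition pref_sat_i {A : Type} (I : finterp A) (r : prule A) (i : nat) : Prop :=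
  sat_conj I (pbody r) /\ sat_dnf I (nth i (phead r) []).

Definition pref_sat_irr {A : Type} (I : finterp A) (r : prule A) : Prop :=
  (sat_conj I (pbody r) /\
     (forall i, (i < length (phead r))%nat -> ~ sat_dnf I (nth i (phead r) [])))
  \/ ~ sat_conj I (pbody r).

Definition fuzzy_answer_set_opt {A : Type} (Rgen : list (frule A))
  (Rpref : list (prule A)) (I : finterp A) : Prop :=
  fuzzy_answer_set Rgen I.

Definition wf_annot (mu : R) : Prop := 0 <= mu <= 1.
Definition wf_blit {A : Type} (b : blit A) : Prop :=
  match b with BL _ mu => wf_annot mu | NotL _ mu => wf_annot mu end.
Definition wf_frule {A : Type} (r : frule A) : Prop :=
  wf_annot (snd (fhead r)) /\ Forall wf_blit (fbody r).
Definition wf_prule {A : Type} (r : prule A) : Prop :=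
  Forall (Forall (Forall wf_blit)) (phead r) /\ Forall wf_blit (pbody r).
Definition wf_program {A : Type} (Rgen : list (frule A)) (Rpref : list (prule A)) : Prop :=
  Forall wf_frule Rgen /\ Forall wf_prule Rpref.

(** Atoms of the translation Pi^e: original atoms plus the fresh atoms
    body(r), sat(r,i), sat(r,irr); a preference rule r is identified by its
    (0-based) position j in R_pref. *)
Inductive eatom (A : Type) : Type :=
| Orig (a : A)
| BodyA (j : nat)
| SatA (j i : nat)
| SatIrr (j : nat).
Arguments Orig {A} a.
Arguments BodyA {A} j.
Arguments SatA {A} j i.
Arguments SatIrr {A} j.

Definition lift_lit {A : Type} (l : lit A) : lit (eatom A) :=
  match l with Pos a => Pos (Orig a) | Neg a => Neg (Orig a) end.

Definition lift_blit {A : Type} (b : blit A) : blit (eatom A) :=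
  match b with BL l mu => BL (lift_lit l) mu | NotL l mu => NotL (lift_lit l) mu end.

Definition lift_frule {A : Type} (r : frule A) : frule (eatom A) :=
  mkFrule (lift_lit (fst (fhead r)), snd (fhead r)) (map lift_blit (fbody r)).

Definition trans_pref {A : Type} (j : nat) (r : prule A) : list (frule (eatom A)) :=
  mkFrule (Pos (BodyA j), 1) (map lift_blit (pbody r))
  ::
  (* sat(r,i):1 <- s_{v,1}:mu_{v,1}, ..., s_{v,t_v}:mu_{v,t_v}, body(r):1 *)
  flat_map (fun iC : nat * dnf A =>
              map (fun conj => mkFrule (Pos (SatA j (fst iC)), 1)
                                       (map lift_blit conj ++ [BL (Pos (BodyA j)) 1]))
                  (snd iC))
           (combine (seq 0 (length (phead r))) (phead r))
  ++
  [
    mkFrule (Pos (SatIrr j), 1) [NotL (Pos (BodyA j)) 1];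
    mkFrule (Pos (SatIrr j), 1)
            (map (fun i => NotL (Pos (SatA j i)) 1) (seq 0 (length (phead r)))
               ++ [BL (Pos (BodyA j)) 1]) ].

Definition translate {A : Type} (Rgen : list (frule A)) (Rpref : list (prule A))
  : list (frule (eatom A)) :=
  map lift_frule Rgen ++
  flat_map (fun jr : nat * prule A => trans_pref (fst jr) (snd jr))
           (combine (seq 0 (length Rpref)) Rpref).

Definition corresponds {A : Type} (I : finterp A) (I' : finterp (eatom A)) : Prop :=
  forall l, I' (lift_lit l) = I l.

(* Main.v *)
Require Import Defs.
From Stdlib Require Import Reals List Lia Classical.
Import ListNotations.
Open Scope R_scope.

Lemma combine_in_inv {B : Type} (l : list B) : forall k a b,
  In (a, b) (combine (seq k (length l)) l) -> exists n, a = (k + n)%nat /\ nth_error l n = Some b.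
Proof.
  induction l as [|x l IH]; simpl; intros k a b H; [contradiction|].
  destruct H as [H|H].
  - inversion H; subst. exists 0%nat. split; [lia|reflexivity].
  - destruct (IH _ _ _ H) as [n [-> Hn]]. exists (S n). split; [lia|exact Hn].
Qed.

Lemma combine_in {B : Type} (l : list B) : forall k n b,
  nth_error l n = Some b -> In ((k + n)%nat, b) (combine (seq k (length l)) l).
Proof.
  induction l as [|x l IH]; simpl; intros k n b H.
  - destruct n; discriminate.
  - destruct n as [|n]; simpl in H.
    + inversion H; subst. left. f_equal. lia.
    + right. replace (k + S n)%nat with (S k + n)%nat by lia. apply IH; exact H.
Qed.

Lemma sat_nal_iff {X : Type} (J : finterp X) l mu : sat_nal J l mu <-> ~ sat_al J l mu.
Proof.
  unfold sat_nal, sat_al. destruct (J l) as [v|]; split.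
  - intros H [w [Hw Hl]]. inversion Hw; subst. auto.
  - intros H Hl. apply H. eauto.
  - intros _ [w [Hw _]]. discriminate.
  - auto.
Qed.

Lemma lift_blit_iff {A : Type} (I : finterp A) I' b :
  corresponds I I' -> (sat_blit I' (lift_blit b) <-> sat_blit I b).
Proof.
  intros Hc. destruct b as [l mu|l mu]; simpl; unfold sat_al, sat_nal; rewrite Hc; tauto.
Qed.

Lemma lift_conj_iff {A : Type} (I : finterp A) I' b :
  corresponds I I' -> (sat_conj I' (map lift_blit b) <-> sat_conj I b).
Proof.
  intros Hc. unfold sat_conj. induction b as [|x b IH]; simpl.
  - split; constructor.
  - split; intros H; inversion H; subst; constructor.
    + apply (lift_blit_iff I I'); auto.
    + apply IH; auto.
    + apply (lift_blit_iff I I'); auto.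
    + apply IH; auto.
Qed.

Lemma sat_neg_ok {X : Type} (J : finterp X) b : sat_conj J b -> neg_ok J b.
Proof.
  unfold sat_conj, neg_ok. intros H. eapply Forall_impl; [|exact H].
  intros [l mu|l mu]; simpl; auto.
Qed.

Lemma sat_pos_part {X : Type} (J : finterp X) b : sat_conj J b -> sat_conj J (pos_part b).
Proof.
  unfold sat_conj. intros H. induction H; simpl; [constructor|].
  destruct x; simpl; auto.
Qed.

Lemma pos_neg_sat {X : Type} (J : finterp X) b :
  sat_conj J (pos_part b) -> neg_ok J b -> sat_conj J b.
Proof.
  unfold sat_conj, neg_ok. induction b as [|x b IH]; simpl; intros H1 H2; [constructor|].
  inversion H2; subst. destruct x; simpl in *.
  - inversion H1; subst. constructor; auto.
  - constructor; auto.
Qed.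

Lemma fas_apply {X : Type} (P : list (frule X)) J x :
  fuzzy_answer_set P J -> In x P -> sat_conj J (fbody x) ->
  sat_al J (fst (fhead x)) (snd (fhead x)).
Proof.
  intros [_ [Hm _]] Hin Hs.
  apply (Hm (mkFrule (fhead x) (pos_part (fbody x)))).
  - exists x. split; [exact Hin|]. split; [apply sat_neg_ok; exact Hs|reflexivity].
  - simpl. apply sat_pos_part; exact Hs.
Qed.

Lemma removal {X : Type} (P : list (frule X)) J (p : lit X -> bool) :
  fuzzy_answer_set P J ->
  (forall x, In x P -> p (fst (fhead x)) = true -> ~ sat_conj J (fbody x)) ->
  forall l, p l = true -> J l = None.
Proof.
  intros HF Hyp l Hl.
  set (K := fun l => if p l then None else J l).
  assert (HKJ : forall l v, K l = Some v -> J l = Some v).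
  { intros l' v. unfold K. destruct (p l'); congruence. }
  destruct HF as [Hfi [Hm Hmin]].
  assert (HKle : le_interp K J).
  { intros l' v H. exists v. split; [apply HKJ; auto|apply Rle_refl]. }
  assert (Hmon : forall b, sat_conj K (pos_part b) -> sat_conj J (pos_part b)).
  { unfold sat_conj. induction b as [|x b IH]; simpl; intros H; auto.
    destruct x; simpl in *; auto.
    inversion H; subst. constructor; auto.
    destruct H2 as [v [Hv Hle]]. exists v. split; auto. }
  assert (HK : model (reduct P J) K).
  { intros r' [x [Hin [Hneg ->]]]. unfold sat_rule; simpl. intros Hs.
    pose proof (pos_neg_sat J _ (Hmon _ Hs) Hneg) as Hb.
    destruct (p (fst (fhead x))) eqn:Hp.
    - exfalso. exact (Hyp x Hin Hp Hb).
    - assert (Hr : sat_rule J (mkFrule (fhead x) (pos_part (fbody x)))).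
      { apply Hm. exists x. auto. }
      unfold sat_rule in Hr; simpl in Hr.
      destruct (Hr (Hmon _ Hs)) as [v [Hv Hle]]. exists v. split; auto.
      unfold K. rewrite Hp. exact Hv. }
  assert (Hfk : fuzzy_interp K).
  { intros l' v H. apply (Hfi l'). apply HKJ; auto. }
  pose proof (Hmin K Hfk HK HKle) as Hle.
  destruct (J l) as [v|] eqn:E; auto.
  destruct (Hle l v E) as [w [Hw _]]. unfold K in Hw. rewrite Hl in Hw. discriminate.
Qed.

Definition satrule {A : Type} (j i : nat) (c : list (blit A)) : frule (eatom A) :=
  mkFrule (Pos (SatA j i), 1) (map lift_blit c ++ [BL (Pos (BodyA j)) 1]).

Lemma trans_pref_inv {A : Type} j (r : prule A) x :
  In x (trans_pref j r) ->
  x = mkFrule (Pos (BodyA j), 1) (map lift_blit (pbody r)) \/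
  (exists i C c, nth_error (phead r) i = Some C /\ In c C /\ x = satrule j i c) \/
  x = mkFrule (Pos (SatIrr j), 1) [NotL (Pos (BodyA j)) 1] \/
  x = mkFrule (Pos (SatIrr j), 1)
            (map (fun i => NotL (Pos (SatA j i)) 1) (seq 0 (length (phead r)))
               ++ [BL (Pos (BodyA j)) 1]).
Proof.
  unfold trans_pref. simpl. intros [H|H]; [left; auto|].
  apply in_app_or in H. destruct H as [H|H].
  - right; left. apply in_flat_map in H. destruct H as [[i C] [Hi Hx]].
    apply combine_in_inv in Hi. destruct Hi as [n [Hn HC]]. simpl in *. subst.
    apply in_map_iff in Hx. destruct Hx as [c [Hc Hin]].
    exists n, C, c. auto.
  - simpl in H. destruct H as [H|[H|[]]]; auto.
Qed.

Lemma translate_inv {A : Type} Rgen (Rpref : list (prule A)) x :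
  In x (translate Rgen Rpref) ->
  (exists g, x = lift_frule g) \/
  exists j r, nth_error Rpref j = Some r /\ In x (trans_pref j r).
Proof.
  unfold translate. intros H. apply in_app_or in H. destruct H as [H|H].
  - left. apply in_map_iff in H. destruct H as [g [Hg _]]. eauto.
  - right. apply in_flat_map in H. destruct H as [[j r] [Hj Hx]].
    apply combine_in_inv in Hj. destruct Hj as [n [Hn Hr]]. simpl in *. subst. eauto.
Qed.

Lemma trans_in {A : Type} Rgen (Rpref : list (prule A)) j r x :
  nth_error Rpref j = Some r -> In x (trans_pref j r) -> In x (translate Rgen Rpref).
Proof.
  intros Hj Hx. unfold translate. apply in_or_app. right.
  apply in_flat_map. exists (j, r). split; auto.
  apply (combine_in Rpref 0 j r Hj).
Qed.

Lemma satrule_in {A : Type} j (r : prule A) i C c :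
  nth_error (phead r) i = Some C -> In c C -> In (satrule j i c) (trans_pref j r).
Proof.
  intros Hi Hc. unfold trans_pref. right. apply in_or_app. left.
  apply in_flat_map. exists (i, C). split.
  - apply (combine_in (phead r) 0 i C Hi).
  - simpl. apply in_map_iff. exists c. auto.
Qed.

Lemma head_lift {A : Type} (g : frule A) :
  exists a, fst (fhead (lift_frule g)) = Pos (Orig a) \/ fst (fhead (lift_frule g)) = Neg (Orig a).
Proof. destruct g as [[[a|a] mu] b]; simpl; eauto. Qed.

Definition isBody {A} j (l : lit (eatom A)) : bool :=
  match l with Pos (BodyA j') => Nat.eqb j j' | _ => false end.
Definition isSat {A} j i (l : lit (eatom A)) : bool :=
  match l with Pos (SatA j' i') => andb (Nat.eqb j j') (Nat.eqb i i') | _ => false end.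
Definition isIrr {A} j (l : lit (eatom A)) : bool :=
  match l with Pos (SatIrr j') => Nat.eqb j j' | _ => false end.

Lemma body_char {A : Type} Rgen (Rpref : list (prule A)) j r I I' :
  nth_error Rpref j = Some r ->
  fuzzy_answer_set (translate Rgen Rpref) I' -> corresponds I I' ->
  (sat_al I' (Pos (BodyA j)) 1 <-> sat_conj I (pbody r)).
Proof.
  intros Hj HF Hc. split.
  - intros Hs. apply NNPP. intros Hn.
    assert (E : I' (Pos (BodyA j)) = None).
    { apply (removal _ _ (isBody j) HF); [|simpl; apply Nat.eqb_refl].
      intros x Hin Hp. apply translate_inv in Hin.
      destruct Hin as [[g ->]|[j' [r' [Hj' Hx]]]].
      - destruct (head_lift g) as [a [Ha|Ha]]; rewrite Ha in Hp; discriminate.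
      - apply trans_pref_inv in Hx.
        destruct Hx as [->|[[i [C [c [_ [_ ->]]]]]|[->| ->]]]; simpl in Hp; try discriminate.
        apply Nat.eqb_eq in Hp. subst j'. rewrite Hj in Hj'. inversion Hj'; subst.
        simpl. rewrite (lift_conj_iff I I'); auto. }
    destruct Hs as [v [Hv _]]. congruence.
  - intros Hs.
    apply (fas_apply _ _ (mkFrule (Pos (BodyA j), 1) (map lift_blit (pbody r))) HF).
    + apply (trans_in _ _ j r); auto. left; reflexivity.
    + simpl. apply (lift_conj_iff I I'); auto.
Qed.

Lemma sat_app {X} (J : finterp X) a b : sat_conj J (a ++ b) <-> sat_conj J a /\ sat_conj J b.
Proof. unfold sat_conj. rewrite Forall_app. tauto. Qed.

Lemma part1 {A : Type} Rgen (Rpref : list (prule A)) j r i I I' :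
  nth_error Rpref j = Some r -> (i < length (phead r))%nat ->
  fuzzy_answer_set (translate Rgen Rpref) I' -> corresponds I I' ->
  (pref_sat_i I r i <-> sat_al I' (Pos (SatA j i)) 1).
Proof.
  intros Hj Hi HF Hc. split.
  - intros [Hb Hd]. unfold sat_dnf in Hd. apply Exists_exists in Hd.
    destruct Hd as [c [Hin Hsc]].
    destruct (nth_error (phead r) i) as [C|] eqn:EC;
      [|apply nth_error_None in EC; lia].
    rewrite (nth_error_nth _ _ _ EC) in Hin.
    apply (fas_apply _ _ (satrule j i c) HF).
    + apply (trans_in _ _ j r); auto. apply (satrule_in j r i C); auto.
    + simpl. apply sat_app. split.
      * apply (lift_conj_iff I I'); auto.
      * constructor; [|constructor]. simpl. apply (body_char Rgen Rpref j r I I'); auto.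
  - intros Hs. apply NNPP. intros Hn.
    assert (E : I' (Pos (SatA j i)) = None).
    { apply (removal _ _ (isSat j i) HF);
        [|simpl; rewrite !Nat.eqb_refl; reflexivity].
      intros x Hin Hp. apply translate_inv in Hin.
      destruct Hin as [[g ->]|[j' [r' [Hj' Hx]]]].
      - destruct (head_lift g) as [a [Ha|Ha]]; rewrite Ha in Hp; discriminate.
      - apply trans_pref_inv in Hx.
        destruct Hx as [->|[[i' [C [c [HC [Hc' ->]]]]]|[->| ->]]]; simpl in Hp; try discriminate.
        apply andb_prop in Hp. destruct Hp as [H1 H2].
        apply Nat.eqb_eq in H1. apply Nat.eqb_eq in H2. subst j' i'.
        rewrite Hj in Hj'. inversion Hj'; subst r'.
        simpl. rewrite sat_app. intros [H1 H2]. apply Hn. split.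
        + inversion H2; subst. simpl in H3.
          apply (body_char Rgen Rpref j r I I'); auto.
        + unfold sat_dnf. apply Exists_exists. exists c. split.
          * rewrite (nth_error_nth _ _ _ HC). auto.
          * apply (lift_conj_iff I I'); auto. }
    destruct Hs as [v [Hv _]]. congruence.
Qed.

Theorem theorem1 (A : Type) (Rgen : list (frule A)) (Rpref : list (prule A))
  (j : nat) (r : prule A) (i : nat) (I : finterp A) (I' : finterp (eatom A)) :
  wf_program Rgen Rpref ->
  nth_error Rpref j = Some r ->
  (i < length (phead r))%nat ->
  fuzzy_answer_set_opt Rgen Rpref I ->
  fuzzy_answer_set (translate Rgen Rpref) I' ->
  corresponds I I' ->
  (pref_sat_i I r i <-> sat_al I' (Pos (SatA j i)) 1) /\
  (pref_sat_irr I r <-> sat_al I' (Pos (SatIrr j)) 1).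
Proof.
  intros _ Hj Hi _ HF Hc. split; [apply (part1 Rgen Rpref); auto|].
  split.
  - intros [[Hb Hn]|Hn].
    + apply (fas_apply _ _ (mkFrule (Pos (SatIrr j), 1)
            (map (fun i => NotL (Pos (SatA j i)) 1) (seq 0 (length (phead r)))
               ++ [BL (Pos (BodyA j)) 1])) HF).
      * apply (trans_in _ _ j r); auto. unfold trans_pref. right. apply in_or_app.
        right. right. left. reflexivity.
      * simpl. apply sat_app. split.
        -- unfold sat_conj. apply Forall_forall. intros b Hb'.
           apply in_map_iff in Hb'. destruct Hb' as [k [<- Hk]].
           apply in_seq in Hk. simpl. apply sat_nal_iff.
           rewrite <- (part1 Rgen Rpref j r k I I'); auto; [|lia].
           intros [_ Hd]. apply (Hn k); auto. lia.
        -- constructor; [|constructor]. simpl.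
           apply (body_char Rgen Rpref j r I I'); auto.
    + apply (fas_apply _ _ (mkFrule (Pos (SatIrr j), 1) [NotL (Pos (BodyA j)) 1]) HF).
      * apply (trans_in _ _ j r); auto. unfold trans_pref. right. apply in_or_app.
        right. left. reflexivity.
      * simpl. constructor; [|constructor]. simpl. apply sat_nal_iff.
        rewrite (body_char Rgen Rpref j r I I'); auto.
  - intros Hs. unfold pref_sat_irr.
    destruct (classic (sat_conj I (pbody r))) as [Hb|Hb]; [left|right; auto].
    split; auto. intros k Hk Hd.
    assert (HB : sat_al I' (Pos (BodyA j)) 1) by (apply (body_char Rgen Rpref j r I I'); auto).
    assert (HS : sat_al I' (Pos (SatA j k)) 1)
      by (apply (part1 Rgen Rpref j r k I I'); auto; split; auto).
    assert (E : I' (Pos (SatIrr j)) = None).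
    { apply (removal _ _ (isIrr j) HF); [|simpl; apply Nat.eqb_refl].
      intros x Hin Hp. apply translate_inv in Hin.
      destruct Hin as [[g ->]|[j' [r' [Hj' Hx]]]].
      - destruct (head_lift g) as [a [Ha|Ha]]; rewrite Ha in Hp; discriminate.
      - apply trans_pref_inv in Hx.
        destruct Hx as [->|[[i' [C [c [HC [Hc' ->]]]]]|[->| ->]]]; simpl in Hp; try discriminate;
        apply Nat.eqb_eq in Hp; subst j'; rewrite Hj in Hj'; inversion Hj'; subst r'; simpl.
        + intros H. inversion H; subst. simpl in H2. apply sat_nal_iff in H2. auto.
        + rewrite sat_app. intros [H1 _]. unfold sat_conj in H1.
          rewrite Forall_forall in H1.
          assert (Hm : In (NotL (Pos (@SatA A j k)) 1)
                    (map (fun i => NotL (Pos (SatA j i)) 1) (seq 0 (length (phead r))))).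
          { apply in_map_iff. exists k. split; auto. apply in_seq. lia. }
          specialize (H1 _ Hm). simpl in H1. apply sat_nal_iff in H1. auto. }
    destruct Hs as [v [Hv _]]. congruence.
Qed.
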